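(* Let $n\ge 2$ and $w\in S_n$, and let $P=[C_1,\dots,C_k]$ be a path in the conflated expression graph $\Gamma_w$. If $\tilde p$ and $\tilde p'$ are two lifts of $P$ to $Rex(w)$, then $f(\tilde p)=f(\tilde p')$. In other words, the path morphism $f(P):=f(\tilde p)$ of a path in $\Gamma_w$ is well defined.
   Context: $S_n$ is the symmetric group with simple reflections $s_i=(i\ i+1)$, $1\le i\le n-1$; in words we write $i$ for $s_i$. A reduced expression of $w$ is a word $i_1\cdots i_k$ with $w=s_{i_1}\cdots s_{i_k}$ and $k$ minimal. The rex graph $Rex(w)$ has as vertices the reduced expressions of $w$, with an edge between two reduced expressions that differ by a single braid relation applied to consecutive letters: either $i(i+1)i\leftrightarrow (i+1)i(i+1)$ (an adjacent edge) or $ij\leftrightarrow ji$ with $|i-j|\ge 2$ (a distant edge). Let $R=\mathbb{R}[x_1,\dots,x_n]$, graded with $\deg x_i=2$, with $s_i$ acting by swapping $x_i$ and $x_{i+1}$; $R^{s}$ denotes the $s$-invariants, $B_i=R\otimes_{R^{s_i}}R(1)$, and for a word $i_1\cdots i_k$ the Bott–Samelson bimodule is $B_{i_1}\otimes_R\cdots\otimes_R B_{i_k}$. For $i\ne j$ let $m_{ij}\in\{2,3\}$ be the order of $s_is_j$ and let $f_{ij}:B_iB_jB_i\cdots\to B_jB_iB_j\cdots$ (each with $m_{ij}$ factors) be the unique degree-$0$ $R$-bimodule morphism sending $1\otimes\cdots\otimes 1$ to $1\otimes\cdots\otimes1$. Traversing an edge from $\underline u$ to $\underline v$, where $\underline v$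 is obtained from $\underline u$ by replacing a consecutive subword $iji\cdots$ ($m_{ij}$ letters) by $jij\cdots$, gives the morphism $\mathrm{Id}\otimes f_{ij}\otimes\mathrm{Id}:B_{\underline u}\to B_{\underline v}$. For a path $p$ (a sequence of vertices, consecutive ones joined by an edge) the path morphism $f(p)$ is the composite of the edge morphisms along $p$ (the identity for a one-vertex path). A cloud is an equivalence class of vertices of $Rex(w)$ under the equivalence relation generated by distant edges. The conflated expression graph $\Gamma_w$ has the clouds as vertices, with an edge between two distinct clouds whenever some adjacent edge of $Rex(w)$ joins an element of one to an element of the other; for each such pair of clouds one adjacent edge joining them is fixed (the representative edge), and each cloud $C$ has a fixed representative element $\mathrm{rep}(C)$ (by convention the lexicographically smallest). A lift of a path $P=[C_1,\dots,C_k]$ in $\Gamma_w$ is a path in $Rex(w)$ that starts at $\mathrm{rep}(C_1)$, ends at $\mathrm{rep}(C_k)$, whose adjacent edges are, in order, the representative edges for $\{C_1,C_2\},\dots,\{C_{k-1},C_k\}$, and all of whose other edges are distant edges. *)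

(* Defs.v *)
From mathcomp Require Import all_boot all_algebra all_fingroup.
From mathcomp Require Import reals.
From mathcomp Require Import mpoly.
From Stdlib Require Import Relations.

Set Implicit Arguments.
Unset Strict Implicit.
Unset Printing Implicit Defensive.

Import GRing.Theory.
Local Open Scope ring_scope.

(* Letters of words are natural numbers i (standing for s_i), and the  *)
(* symmetric group acts on {1,...,n}.                                  *)

Definition sigma (i : nat) (t : nat) : nat :=
  if t == i then i.+1 else if t == i.+1 then i else t.

Definition prodw (u : seq nat) : nat -> nat :=
  foldr (fun i f => sigma i \o f) id u.

Definition valid_word (n : nat) (u : seq nat) : bool :=
  all (fun i => (0 < i < n)%N) u.

(* u is an expression of w (w acting on {1..n}, written 0-based as 'I_n) *)
Definition expr_of (n : nat) (w : 'S_n) (u : seq nat) : Prop :=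
  valid_word n u /\ forall t : 'I_n, prodw u (nat_of_ord t).+1 = (nat_of_ord (w t)).+1.

Definition isRex (n : nat) (w : 'S_n) (u : seq nat) : Prop :=
  expr_of w u /\ forall u', expr_of w u' -> (size u <= size u')%N.

Definition dedge (u v : seq nat) : Prop :=
  exists a b i j, ((i.+1 < j) || (j.+1 < i))%N /\
    u = a ++ [:: i; j] ++ b /\ v = a ++ [:: j; i] ++ b.

Definition aedge (u v : seq nat) : Prop :=
  exists a b i,
    (u = a ++ [:: i; i.+1; i] ++ b /\ v = a ++ [:: i.+1; i; i.+1] ++ b) \/
    (u = a ++ [:: i.+1; i; i.+1] ++ b /\ v = a ++ [:: i; i.+1; i] ++ b).

Definition rex_dedge (n : nat) (w : 'S_n) (u v : seq nat) : Prop :=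
  isRex w u /\ isRex w v /\ dedge u v.

Definition sameCloud (n : nat) (w : 'S_n) (u v : seq nat) : Prop :=
  clos_refl_trans _ (rex_dedge w) u v.

Definition cloudsAdj (n : nat) (w : 'S_n) (C C' : seq nat) : Prop :=
  exists a b, isRex w a /\ isRex w b /\ sameCloud w a C /\ sameCloud w b C' /\
    aedge a b.

Fixpoint lexle (u v : seq nat) : bool :=
  match u, v with
  | [::], _ => true
  | _ :: _, [::] => false
  | a :: u', b :: v' => (a < b)%N || ((a == b) && lexle u' v')
  end.

Definition isRep (n : nat) (w : 'S_n) (C r : seq nat) : Prop :=
  isRex w r /\ sameCloud w r C /\
  forall v, isRex w v -> sameCloud w v C -> lexle r v.

Definition validRedge (n : nat) (w : 'S_n)
    (E : seq nat -> seq nat -> seq nat * seq nat) : Prop :=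
  forall C C', isRex w C -> isRex w C' -> ~ sameCloud w C C' -> cloudsAdj w C C' ->
    isRex w (E C C').1 /\ isRex w (E C C').2 /\
    sameCloud w (E C C').1 C /\ sameCloud w (E C C').2 C' /\
    aedge (E C C').1 (E C C').2 /\
    (forall D D', isRex w D -> isRex w D' -> sameCloud w D C ->
        sameCloud w D' C' -> E D D' = E C C') /\
    E C' C = ((E C C').2, (E C C').1).

Fixpoint chain (T : Type) (r : T -> T -> Prop) (x : T) (s : seq T) : Prop :=
  match s with
  | [::] => True
  | y :: s' => r x y /\ chain r y s'
  end.

(* A path [C_1, ..., C_k] in Gamma_w, clouds given by members. *)
Definition isGpath (n : nat) (w : 'S_n) (Cs : seq (seq nat)) : Prop :=
  match Cs with
  | [::] => False
  | C :: Cs' => (forall D, D \in Cs -> isRex w D) /\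
      chain (fun D D' => ~ sameCloud w D D' /\ cloudsAdj w D D') C Cs'
  end.

Definition steps (T : Type) (x : T) (s : seq T) : seq (T * T) := zip (x :: s) s.

Fixpoint adjSteps (st es : seq (seq nat * seq nat)) : Prop :=
  match st with
  | [::] => es = [::]
  | (a, b) :: st' =>
      (aedge a b /\ exists es', es = (a, b) :: es' /\ adjSteps st' es') \/
      (dedge a b /\ adjSteps st' es)
  end.

Definition isLift (n : nat) (w : 'S_n) (E : seq nat -> seq nat -> seq nat * seq nat)
    (Cs : seq (seq nat)) (p : seq (seq nat)) : Prop :=
  match Cs, p with
  | C1 :: Cs', v0 :: vs =>
      (forall v, v \in p -> isRex w v) /\
      isRep w C1 v0 /\ isRep w (last C1 Cs') (last v0 vs) /\
      adjSteps (steps v0 vs) [seq E x.1 x.2 | x <- steps C1 Cs']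
  | _, _ => False
  end.

(* B_{i_1} ... B_{i_l} = R (x)_{R^{s_{i_1}}} R (x) ... (x) R is         *)
(* realized as the quotient of the polynomial ring in (l+1) blocks of n *)
(* variables x^{(0)},...,x^{(l)} (variable x^{(b)}_{j+1} has index      *)
(* b*n+j) by the ideal generated by p(x^{(t)}) - p(x^{(t+1)}) for all   *)
(* p in R^{s_{i_{t+1}}}.  Elements are represented by polynomials, and  *)
(* morphisms by maps on representatives; equality is modulo the ideal.  *)

Unset Implicit Arguments.
Section Bimod.
Variables (R : realType) (n : nat).

Definition PR (k : nat) := {mpoly R[k]}.

(* the variable with index t in R[x_0..x_{k-1}] (0 if out of range) *)
Definition varX (k t : nat) : {mpoly R[k]} :=
  if insub t is Some i then 'X_i else 0.

Definition bvar (k b j : nat) : {mpoly R[k]} := varX k (b * n + j).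

(* the action of s_i (1 <= i <= n-1) on R = R[x_1..x_n]: swap x_i, x_{i+1} *)
(* (0-based variable indices i-1 and i)                                   *)
Definition sact (i : nat) (p : {mpoly R[n]}) : {mpoly R[n]} :=
  mmap (@mpolyC n R) (fun j : 'I_n => varX n (sigma i (nat_of_ord j).+1).-1) p.

Definition invariant (i : nat) (p : {mpoly R[n]}) : Prop := sact i p = p.

Definition emb (k b : nat) (p : {mpoly R[n]}) : {mpoly R[k]} :=
  mmap (@mpolyC k R) (fun j : 'I_n => bvar k b j) p.

Definition bsgen (k : nat) (u : seq nat) (g : {mpoly R[k]}) : Prop :=
  exists t (p : {mpoly R[n]}), (t < size u)%N /\ invariant (nth 0%N u t) p /\
    g = emb k t p - emb k t.+1 p.

Definition inIdeal (k : nat) (u : seq nat) (r : {mpoly R[k]}) : Prop :=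
  exists gs rs : seq {mpoly R[k]}, size gs = size rs /\
    (forall g, g \in gs -> bsgen k u g) /\
    r = \sum_(t < size gs) rs`_t * gs`_t.

Definition cong (k : nat) (u : seq nat) (p q : {mpoly R[k]}) : Prop :=
  inIdeal k u (p - q).

Definition mlen (i j : nat) : nat := if (i == j.+1) || (j == i.+1) then 3 else 2.

Fixpoint altw (i j m : nat) : seq nat :=
  if m is m'.+1 then i :: altw j i m' else [::].

(* f : B_{iji..} -> B_{jij..} (m_ij factors, k = (m_ij+1) n variables) is  *)
(* a well-defined degree 0 R-bimodule morphism sending 1 (x)..(x) 1 to     *)
(* 1 (x) .. (x) 1 (degree = twice the polynomial degree; the grading       *)
(* shifts (m_ij) on both sides cancel).                                   *)
Definition isBraidMor (i j : nat) (f : PR ((mlen i j).+1 * n) -> PR ((mlen i j).+1 * n))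
    : Prop :=
  let k := ((mlen i j).+1 * n)%N in
  let U := altw i j (mlen i j) in
  let V := altw j i (mlen i j) in
  [/\ (forall p q, cong k U p q -> cong k V (f p) (f q)),
      (forall p q, cong k V (f (p + q)) (f p + f q)),
      (forall (a b : {mpoly R[n]}) p,
          cong k V (f (emb k 0 a * p * emb k (mlen i j) b)) (emb k 0 a * f p * emb k (mlen i j) b)),
      (forall (d : nat) p, p \is d.-homog -> exists q, q \is d.-homog /\ cong k V (f p) q) &
      cong k V (f 1) 1].

(* Id (x) f (x) Id, with f acting on the tensor factors at letter positions *)
(* s, ..., s+ml-1 (blocks s, ..., s+ml), on B_u with u of length l, k=(l+1)n.*)
Definition partA (k s : nat) (m : 'X_{1..k}) : {mpoly R[k]} :=
  \prod_(t < k | (t %/ n < s)%N) 'X_t ^+ m t.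
Definition partC (k s ml : nat) (m : 'X_{1..k}) : {mpoly R[k]} :=
  \prod_(t < k | (s + ml < t %/ n)%N) 'X_t ^+ m t.
Definition partM (k k' s ml : nat) (m : 'X_{1..k}) : {mpoly R[k']} :=
  \prod_(t < k | (s <= t %/ n <= s + ml)%N) bvar k' (t %/ n - s) (t %% n) ^+ m t.
Definition shiftP (k' k s : nat) (q : {mpoly R[k']}) : {mpoly R[k]} :=
  mmap (@mpolyC k R) (fun t : 'I_k' => bvar k (s + t %/ n) (t %% n)) q.

Definition liftMor (k ml s : nat) (f : PR (ml.+1 * n) -> PR (ml.+1 * n))
    (p : {mpoly R[k]}) : {mpoly R[k]} :=
  \sum_(m <- msupp p)
     p@_m *: (partA k s m * shiftP (ml.+1 * n) k s (f (partM k (ml.+1 * n) s ml m)) * partC k s ml m).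

Definition edgeMor (k : nat)
    (F : forall i j : nat, PR ((mlen i j).+1 * n) -> PR ((mlen i j).+1 * n))
    (u v : seq nat) : {mpoly R[k]} -> {mpoly R[k]} :=
  let s := find (fun t => nth 0%N u t != nth 0%N v t) (iota 0 (size u)) in
  let i := nth 0%N u s in
  let j := nth 0%N v s in
  liftMor k (mlen i j) s (F i j).

Definition pathMor (k : nat)
    (F : forall i j : nat, PR ((mlen i j).+1 * n) -> PR ((mlen i j).+1 * n))
    (p : seq (seq nat)) : {mpoly R[k]} -> {mpoly R[k]} :=
  match p with
  | [::] => id
  | v0 :: vs => fun x => foldl (fun acc st => edgeMor k F st.1 st.2 acc) x (steps v0 vs)
  end.

End Bimod.

(* Main.v *)
Require Import Defs.
From mathcomp Require Import all_boot all_algebra all_fingroup.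
From mathcomp Require Import reals.
From mathcomp Require Import mpoly.
From mathcomp Require Import ssrcomplements.
From mathcomp Require Import zify ring.

Set Implicit Arguments.
Unset Strict Implicit.
Unset Printing Implicit Defensive.
Import GRing.Theory.
Local Open Scope ring_scope.

Section P1.
Variables (R : realType) (n : nat).

Local Unset Implicit Arguments.
Inductive Idl (k : nat) (u : seq nat) : {mpoly R[k]} -> Prop :=
| Idl0 : Idl k u 0
| IdlG g : bsgen R n k u g -> Idl k u g
| IdlD a b : Idl k u a -> Idl k u b -> Idl k u (a + b)
| IdlM r a : Idl k u a -> Idl k u (r * a).





Arguments Idl0 {k u}.
Arguments IdlG {k u g}.
Arguments IdlD {k u a b}.
Arguments IdlM {k u} r {a}.
Lemma inIdeal_Idl k u r : inIdeal R n k u r <-> Idl k u r.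
Proof.
split.
  case=> gs [rs [hs [hg ->]]].
  apply: (big_ind (Idl k u)); [exact: Idl0| exact: (fun a b => @IdlD k u a b)|].
  move=> t _; apply: IdlM; case: (ltnP t (size gs)) => ht.
    by apply: IdlG; apply: hg; rewrite mem_nth.
  by rewrite nth_default //; apply: Idl0.
elim=> {r}.
- by exists [::], [::]; split=> //; split=> //; rewrite big_ord0.
- move=> g hg; exists [:: g], [:: 1]; split=> //; split.
    by move=> g'; rewrite inE => /eqP ->.
  by rewrite big_ord1 /= mul1r.
- move=> a b _ [gs1 [rs1 [e1 [h1 ->]]]] _ [gs2 [rs2 [e2 [h2 ->]]]].
  exists (gs1 ++ gs2), (rs1 ++ rs2); split; first by rewrite !size_cat e1 e2.
  split; first by move=> g; rewrite mem_cat => /orP [/h1|/h2].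
  rewrite size_cat big_split_ord /=; congr (_ + _); apply: eq_bigr => t _.
    by rewrite !nth_cat -e1 ltn_ord.
  by rewrite !nth_cat -e1 ltnNge leq_addr /= addKn.
- move=> r a _ [gs [rs [e [h ->]]]].
  exists gs, (map (fun x => r * x) rs); split; first by rewrite size_map.
  split=> //; rewrite mulr_sumr; apply: eq_bigr => t _.
  by rewrite (nth_map 0) -?e // mulrA.
Qed.

Notation cg k u := (cong R n k u).

Lemma IdlN k u a : Idl k u a -> Idl k u (- a).
Proof. by move=> h; rewrite -mulN1r; apply: IdlM. Qed.
Lemma IdlB k u a b : Idl k u a -> Idl k u b -> Idl k u (a - b).
Proof. by move=> ha hb; apply: IdlD=> //; apply: IdlN. Qed.
Lemma IdlMr k u r a : Idl k u a -> Idl k u (a * r).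
Proof. by move=> h; rewrite mulrC; apply: IdlM. Qed.

Lemma congE k u p q : cg k u p q <-> Idl k u (p - q).
Proof. exact: inIdeal_Idl. Qed.

Lemma cong_refl k u p : cg k u p p.
Proof. by apply/congE; rewrite subrr; apply: Idl0. Qed.
Lemma cong_sym k u p q : cg k u p q -> cg k u q p.
Proof. by move/congE/IdlN; rewrite opprB => h; apply/congE. Qed.
Lemma cong_trans k u p q r : cg k u p q -> cg k u q r -> cg k u p r.
Proof.
move/congE=> h1 /congE h2; apply/congE.
by have := IdlD h1 h2; rewrite addrA subrK.
Qed.
Lemma congD k u p q p' q' : cg k u p q -> cg k u p' q' -> cg k u (p + p') (q + q').
Proof.
move/congE=> h1 /congE h2; apply/congE.
by have := IdlD h1 h2; rewrite addrACA opprD.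
Qed.
Lemma congN k u p q : cg k u p q -> cg k u (- p) (- q).
Proof. by move/congE/IdlN=> h; apply/congE; rewrite -opprD. Qed.
Lemma congB k u p q p' q' : cg k u p q -> cg k u p' q' -> cg k u (p - p') (q - q').
Proof. by move=> h1 h2; apply: congD=> //; apply: congN. Qed.
Lemma congMl k u r p q : cg k u p q -> cg k u (r * p) (r * q).
Proof. by move/congE/(IdlM r)=> h; apply/congE; rewrite -mulrBr. Qed.
Lemma congMr k u r p q : cg k u p q -> cg k u (p * r) (q * r).
Proof. by move=> h; rewrite ![_ * r]mulrC; apply: congMl. Qed.
Lemma congM k u p q p' q' : cg k u p q -> cg k u p' q' -> cg k u (p * p') (q * q').
Proof.
move=> h1 h2; apply: (@cong_trans _ _ _ (q * p')); first exact: congMr.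
exact: congMl.
Qed.
Lemma congZ k u (c : R) p q : cg k u p q -> cg k u (c *: p) (c *: q).
Proof. by move=> h; rewrite -!mul_mpolyC; apply: congMl. Qed.
Lemma congX k u p q e : cg k u p q -> cg k u (p ^+ e) (q ^+ e).
Proof.
move=> h; elim: e => [|e ih]; first by rewrite !expr0; apply: cong_refl.
by rewrite !exprS; apply: congM.
Qed.
Lemma cong_sum k u (I : Type) (r : seq I) (P : pred I) (f g : I -> {mpoly R[k]}) :
  (forall i, P i -> cg k u (f i) (g i)) ->
  cg k u (\sum_(i <- r | P i) f i) (\sum_(i <- r | P i) g i).
Proof.
move=> h; elim/big_rec2: _; first exact: cong_refl.
by move=> i a b hi hab; apply: congD=> //; apply: h.
Qed.
Lemma cong_prod k u (I : Type) (r : seq I) (P : pred I) (f g : I -> {mpoly R[k]}) :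
  (forall i, P i -> cg k u (f i) (g i)) ->
  cg k u (\prod_(i <- r | P i) f i) (\prod_(i <- r | P i) g i).
Proof.
move=> h; elim/big_rec2: _; first exact: cong_refl.
by move=> i a b hi hab; apply: congM=> //; apply: h.
Qed.
Lemma cong_gen k u t P : (t < size u)%N -> Defs.invariant R n (nth 0%N u t) P ->
  cg k u (emb R n k t P) (emb R n k t.+1 P).
Proof. by move=> ht hP; apply/congE/IdlG; exists t, P. Qed.

Lemma cong_mmap k k' u (s1 s2 : 'I_k' -> {mpoly R[k]}) (P : {mpoly R[k']}) :
  (forall i, cg k u (s1 i) (s2 i)) ->
  cg k u (mmap (@mpolyC k R) s1 P) (mmap (@mpolyC k R) s2 P).
Proof.
move=> h; rewrite /mmap; apply: cong_sum=> m _; apply: congMl.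
by apply: cong_prod=> i _; apply: congX.
Qed.
End P1.
Arguments Idl0 {R n k u}.
Arguments IdlG {R n k u g}.
Arguments IdlD {R n k u a b}.
Arguments IdlM {R n k u} r {a}.
Arguments IdlN {R n k u a}.
Arguments IdlB {R n k u a b}.
Arguments IdlMr {R n k u} r {a}.
Arguments congE {R n k u p q}.
Arguments cong_refl {R n k u} p.
Arguments cong_sym {R n k u p q}.
Arguments cong_trans {R n k u p q r}.
Arguments congD {R n k u p q p' q'}.
Arguments congN {R n k u p q}.
Arguments congB {R n k u p q p' q'}.
Arguments congMl {R n k u} r {p q}.
Arguments congMr {R n k u} r {p q}.
Arguments congM {R n k u p q p' q'}.
Arguments congZ {R n k u} c {p q}.
Arguments congX {R n k u p q} e.
Arguments cong_sum {R n k u I r P f g}.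
Arguments cong_prod {R n k u I r P f g}.
Arguments cong_gen {R n k u t P}.
Arguments cong_mmap {R n k k' u s1 s2} P.

Section P2.
Variables (R : realType) (n : nat).

Lemma varX_lt k t (h : (t < k)%N) : varX R k t = 'X_(Ordinal h).
Proof. by rewrite /varX insubT. Qed.
Lemma varX_ord k (i : 'I_k) : varX R k i = 'X_i.
Proof. by rewrite /varX valK. Qed.
Lemma varX_ge k t : (k <= t)%N -> varX R k t = 0.
Proof. by move=> h; rewrite /varX insubF // ltnNge h. Qed.

Lemma mmapXi k k' (g : 'I_k -> {mpoly R[k']}) (i : 'I_k) :
  mmap (@mpolyC k' R) g 'X_i = g i.
Proof. by rewrite mmapX mmap1U. Qed.

Lemma mmap_comp k1 k2 k3 (g1 : 'I_k1 -> {mpoly R[k2]}) (g2 : 'I_k2 -> {mpoly R[k3]}) p :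
  mmap (@mpolyC k3 R) g2 (mmap (@mpolyC k2 R) g1 p) =
  mmap (@mpolyC k3 R) (fun i => mmap (@mpolyC k3 R) g2 (g1 i)) p.
Proof.
rewrite [mmap _ g1 p]/mmap raddf_sum /=; rewrite [RHS]/mmap; apply: eq_bigr=> m _.
rewrite rmorphM /= mmapC rmorph_prod /=; congr (_ * _); apply: eq_bigr=> i _.
by rewrite rmorphXn.
Qed.

Lemma mmap_ext k1 k2 (g1 g2 : 'I_k1 -> {mpoly R[k2]}) p :
  g1 =1 g2 -> mmap (@mpolyC k2 R) g1 p = mmap (@mpolyC k2 R) g2 p.
Proof. by move=> e; rewrite /mmap; apply: eq_bigr=> m _; rewrite (mmap1_eq _ e). Qed.

Lemma mmap_id k (p : {mpoly R[k]}) : mmap (@mpolyC k R) (fun i => 'X_i) p = p.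
Proof.
rewrite {2}(mpolyE p) /mmap; apply: eq_bigr=> m _.
by rewrite mmap1_id mul_mpolyC.
Qed.
End P2.

Definition touch (t l : nat) : bool := (l == t.+1) || (l == t).
Definition seg (u : seq nat) (b t : nat) : nat := count (touch t) (take b u).

Section P3.
Variables (R : realType) (n : nat).
Notation cg k u := (cong R n k u).

Lemma sigma_notouch l t : ~~ touch t l -> sigma l t.+1 = t.+1.
Proof.
rewrite /touch /sigma negb_or => /andP [h1 h2].
by rewrite eq_sym (negbTE h1) eqSS eq_sym (negbTE h2).
Qed.

Lemma inv_notouch l (t : 'I_n) : ~~ touch t l -> Defs.invariant R n l 'X_t.
Proof.
move=> h; rewrite /Defs.invariant /sact mmapXi sigma_notouch //=.
by rewrite varX_ord.
Qed.

Lemma emb_X k b (t : 'I_n) : emb R n k b 'X_t = bvar R n k b t.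
Proof. by rewrite /emb mmapXi. Qed.

Lemma bvar_chain k u b1 b2 t : (t < n)%N -> (b1 <= b2)%N -> (b2 <= size u)%N ->
  (forall c, (b1 <= c < b2)%N -> ~~ touch t (nth 0%N u c)) ->
  cg k u (bvar R n k b1 t) (bvar R n k b2 t).
Proof.
move=> ht; elim: b2 => [|b2 ih] h12 hsz hc.
  by rewrite leqn0 in h12; rewrite (eqP h12); apply: cong_refl.
move: h12; rewrite leq_eqVlt => /orP [/eqP ->|h]; first by apply: cong_refl.
apply: (@cong_trans _ _ _ _ _ (bvar R n k b2 t)).
  apply: ih => //; first by apply: ltnW.
  by move=> c /andP [c1 c2]; apply: hc; rewrite c1 ltnW.
have -> : bvar R n k b2 t = emb R n k b2 'X_(Ordinal ht) by rewrite emb_X.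
have -> : bvar R n k b2.+1 t = emb R n k b2.+1 'X_(Ordinal ht) by rewrite emb_X.
apply: cong_gen => //; apply: inv_notouch; apply: hc.
by rewrite ltnS -ltnS h /=.
Qed.

Lemma seg_cong k u b1 b2 t : (t < n)%N -> (b1 <= size u)%N -> (b2 <= size u)%N ->
  seg u b1 t = seg u b2 t -> cg k u (bvar R n k b1 t) (bvar R n k b2 t).
Proof.
move=> ht.
wlog h12 : b1 b2 / (b1 <= b2)%N.
  move=> hw h1 h2 he; case: (leqP b1 b2) => h; first exact: hw.
  by apply: cong_sym; apply: hw => //; apply: ltnW.
move=> h1 h2; rewrite /seg.
have -> : take b2 u = take b1 u ++ take (b2 - b1) (drop b1 u).
  by rewrite -{1}(cat_take_drop b1 u) take_cat size_takel // ltnNge h12 /=.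
rewrite count_cat -{1}[count _ (take b1 u)]addn0 => /eqP; rewrite eqn_add2l eq_sym.
move=> /eqP hz0.
have /hasPn hz : ~~ has (touch t) (take (b2 - b1) (drop b1 u)) by rewrite has_count hz0.
apply: bvar_chain => // c /andP [c1 c2].
have hn : (c - b1 < size (take (b2 - b1) (drop b1 u)))%N.
  rewrite size_take size_drop.
  case: ifP => _; first by rewrite ltn_sub2rE.
  by rewrite ltn_sub2rE // (leq_trans c2).
have := hz _ (mem_nth 0%N hn); rewrite nth_take ?ltn_sub2rE // nth_drop subnKC //.
Qed.
End P3.

Section P4.
Variables (R : realType) (k : nat).
Variable L : 'X_{1..k} -> {mpoly R[k]}.

Definition lin (p : {mpoly R[k]}) := \sum_(m <- msupp p) p@_m *: L m.

Lemma linE p i : (msize p <= i)%N -> lin p = \sum_(m : 'X_{1..k < i}) p@_m *: L m.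
Proof.
move=> le_pi; set I : subFinType _ := 'X_{1..k < i}.
rewrite /lin (big_mksub I) ?msupp_uniq //=; first last.
  by move=> x /msize_mdeg_lt /leq_trans; apply.
rewrite big_rmcond //= => j /memN_msupp_eq0 ->.
by rewrite scale0r.
Qed.

Lemma linD p q : lin (p + q) = lin p + lin q.
Proof.
pose i := maxn (msize p) (msize q).
have hp : (msize p <= i)%N by rewrite leq_maxl.
have hq : (msize q <= i)%N by rewrite leq_maxr.
have hpq : (msize (p + q) <= i)%N by apply: (leq_trans (msizeD_le _ _)).
rewrite !(linE hp, linE hq, linE hpq) -big_split /=; apply: eq_bigr=> m _.
by rewrite mcoeffD scalerDl.
Qed.

Lemma linZ c p : lin (c *: p) = c *: lin p.
Proof.
pose i := msize p.
have hp : (msize p <= i)%N by [].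
have hcp : (msize (c *: p) <= i)%N by apply: msizeZ_le.
rewrite (linE hp) (linE hcp) scaler_sumr; apply: eq_bigr=> m _.
by rewrite mcoeffZ scalerA.
Qed.

Lemma lin0 : lin 0 = 0.
Proof. by rewrite /lin msupp0 big_nil. Qed.

Lemma linN p : lin (- p) = - lin p.
Proof. by rewrite -scaleN1r linZ scaleN1r. Qed.

Lemma linB p q : lin (p - q) = lin p - lin q.
Proof. by rewrite linD linN. Qed.

Lemma linX m : lin 'X_[m] = L m.
Proof. by rewrite /lin msuppX big_seq1 mcoeffX eqxx scale1r. Qed.

Lemma lin_sum (I : Type) (r : seq I) (P : pred I) (f : I -> {mpoly R[k]}) :
  lin (\sum_(i <- r | P i) f i) = \sum_(i <- r | P i) lin (f i).
Proof.
elim/big_rec2: _; first exact: lin0.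
by move=> i a b _ <-; rewrite linD.
Qed.
End P4.

Section P5.
Variables (R : realType) (n : nat).
Notation cg k u := (cong R n k u).

Lemma bvar_lt k b j : (j < n)%N -> (b.+1 * n <= k)%N -> (b * n + j < k)%N.
Proof. by move=> hj; rewrite mulSn; lia. Qed.

Lemma bvar_div b j : (j < n)%N -> ((b * n + j) %/ n = b)%N.
Proof. by move=> hj; rewrite divnMDl ?divn_small ?addn0 // (leq_ltn_trans _ hj). Qed.

Lemma bvar_mod b j : (j < n)%N -> ((b * n + j) %% n = j)%N.
Proof. by move=> hj; rewrite modnMDl modn_small. Qed.

Lemma bvarE k b j (h : (b * n + j < k)%N) : bvar R n k b j = 'X_(Ordinal h).
Proof. by rewrite /bvar varX_lt. Qed.

Lemma mmap_bvar k k' (g : 'I_k -> {mpoly R[k']}) b j (h : (b * n + j < k)%N) :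
  mmap (@mpolyC k' R) g (bvar R n k b j) = g (Ordinal h).
Proof. by rewrite bvarE mmapXi. Qed.

Lemma ord_divmod k (t : 'I_k) : bvar R n k (t %/ n) (t %% n) = 'X_t.
Proof.
have e : (t %/ n * n + t %% n = t)%N by rewrite -divn_eq.
rewrite /bvar e; exact: varX_ord.
Qed.

Lemma prod_cond_mmap1 k k' (P : pred 'I_k) (g : 'I_k -> {mpoly R[k']}) (m : 'X_{1..k}) :
  \prod_(t < k | P t) g t ^+ m t = mmap1 (fun t => if P t then g t else 1) m.
Proof.
rewrite /mmap1 big_mkcond /=; apply: eq_bigr=> t _.
by case: (P t); rewrite ?expr1n.
Qed.

Lemma mmap1_one k k' (m : 'X_{1..k}) : mmap1 (fun _ : 'I_k => (1 : {mpoly R[k']})) m = 1.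
Proof. by rewrite /mmap1 big1 // => t _; rewrite expr1n. Qed.

Lemma mmap_one_X k k' (m : 'X_{1..k}) : mmap (@mpolyC k' R) (fun _ => 1) 'X_[m] = 1.
Proof. by rewrite mmapX mmap1_one. Qed.

Definition isMono k (q : {mpoly R[k]}) := exists m, q = 'X_[m].
Lemma isMonoM k p q : isMono p -> isMono q -> @isMono k (p * q).
Proof. by case=> m1 -> [m2 ->]; exists (m1 + m2)%MM; rewrite mpolyXD. Qed.
Lemma isMono1 k : @isMono k 1.
Proof. by exists 0%MM; rewrite mpolyX0. Qed.
Lemma isMonoX k p e : @isMono k p -> isMono (p ^+ e).
Proof. by case=> m ->; exists (m *+ e)%MM; rewrite mpolyXn. Qed.
Lemma isMonoXi k (i : 'I_k) : isMono 'X_i.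
Proof. by exists U_(i)%MM. Qed.

Lemma isMono_emb k b (mu : 'X_{1..n}) : (b.+1 * n <= k)%N ->
  isMono (emb R n k b 'X_[mu]).
Proof.
move=> hb; rewrite /emb mmapX /mmap1; apply: (big_ind (@isMono k)).
- exact: isMono1.
- exact: isMonoM.
move=> j _; apply: isMonoX; rewrite (bvarE (bvar_lt (ltn_ord j) hb)); exact: isMonoXi.
Qed.

Lemma emb_sum k b (P : {mpoly R[n]}) :
  emb R n k b P = \sum_(mu <- msupp P) P@_mu *: emb R n k b 'X_[mu].
Proof.
rewrite /emb {1}(mpolyE P) raddf_sum /=; apply: eq_bigr=> mu _.
by rewrite mmapZ mul_mpolyC.
Qed.
End P5.

Section Lift.
Variables (R : realType) (n : nat) (a b U V : seq nat) (ml k : nat).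
Notation cg k u := (cong R n k u).
Notation s := (size a).
Notation u := (a ++ U ++ b).
Notation v := (a ++ V ++ b).
Notation k' := (ml.+1 * n)%N.
Hypotheses (hU : size U = ml) (hV : size V = ml) (hml : (0 < ml)%N)
  (hk : k = ((size u).+1 * n)%N).
Variable f : {mpoly R[k']} -> {mpoly R[k']}.

Definition sA (t : 'I_k) : {mpoly R[k]} := if (t %/ n < s)%N then 'X_t else 1.
Definition sM (t : 'I_k) : {mpoly R[k']} :=
  if (s <= t %/ n <= s + ml)%N then bvar R n k' (t %/ n - s) (t %% n) else 1.
Definition sC (t : 'I_k) : {mpoly R[k]} := if (s + ml < t %/ n)%N then 'X_t else 1.
Notation mA := (mmap (@mpolyC k R) sA).
Notation mM := (mmap (@mpolyC k' R) sM).
Notation mC := (mmap (@mpolyC k R) sC).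
Definition G (q : {mpoly R[k']}) : {mpoly R[k]} := shiftP R n k' k s (f q).
Definition Lm (m : 'X_{1..k}) : {mpoly R[k]} :=
  partA R n k s m * shiftP R n k' k s (f (partM R n k k' s ml m)) * partC R n k s ml m.

Lemma liftMorE p : liftMor R n k ml s f p = lin Lm p.
Proof. by []. Qed.

Lemma LmE m : Lm m = mA 'X_[m] * G (mM 'X_[m]) * mC 'X_[m].
Proof.
rewrite /Lm /G !mmapX /partA /partM /partC !prod_cond_mmap1.
by congr (mmap1 _ _ * shiftP _ _ _ _ _ (f (mmap1 _ _)) * mmap1 _ _).
Qed.

Lemma size_u : size u = (s + ml + size b)%N.
Proof. by rewrite !size_cat hU addnA. Qed.
Lemma size_v : size v = size u.
Proof. by rewrite !size_cat hU hV. Qed.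

Lemma blk_ok bb : (bb <= size u)%N -> (bb.+1 * n <= k)%N.
Proof. by move=> h; rewrite hk leq_mul2r ltnS h orbT. Qed.

Lemma mA_emb bb mu : (bb <= size u)%N ->
  mA (emb R n k bb 'X_[mu]) = if (bb < s)%N then emb R n k bb 'X_[mu] else 1.
Proof.
move=> hb; have hb' := blk_ok hb.
rewrite /emb mmap_comp.
rewrite (@mmap_ext _ _ _ _ (fun j => if (bb < s)%N then bvar R n k bb j else 1)); last first.
  move=> j; rewrite (mmap_bvar _ (bvar_lt (ltn_ord j) hb')) /sA /= bvar_div //.
  by rewrite (bvarE R (bvar_lt (ltn_ord j) hb')).
by case: ifP=> h; rewrite ?h ?mmap_one_X.
Qed.

Lemma mC_emb bb mu : (bb <= size u)%N ->
  mC (emb R n k bb 'X_[mu]) = if (s + ml < bb)%N then emb R n k bb 'X_[mu] else 1.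
Proof.
move=> hb; have hb' := blk_ok hb.
rewrite /emb mmap_comp.
rewrite (@mmap_ext _ _ _ _ (fun j => if (s + ml < bb)%N then bvar R n k bb j else 1)); last first.
  move=> j; rewrite (mmap_bvar _ (bvar_lt (ltn_ord j) hb')) /sC /= bvar_div //.
  by rewrite (bvarE R (bvar_lt (ltn_ord j) hb')).
by case: ifP=> h; rewrite ?h ?mmap_one_X.
Qed.

Lemma mM_emb bb mu : (bb <= size u)%N ->
  mM (emb R n k bb 'X_[mu]) =
    if (s <= bb <= s + ml)%N then emb R n k' (bb - s) 'X_[mu] else 1.
Proof.
move=> hb; have hb' := blk_ok hb.
rewrite /emb mmap_comp.
rewrite (@mmap_ext _ _ _ _ (fun j => if (s <= bb <= s + ml)%N then bvar R n k' (bb - s) j else 1)); last first.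
  move=> j; rewrite (mmap_bvar _ (bvar_lt (ltn_ord j) hb')) /sM /= bvar_div //.
  by rewrite bvar_mod.
by case: ifP=> h; rewrite ?h ?mmap_one_X.
Qed.

Lemma shiftP_emb g P : (g <= ml)%N ->
  shiftP R n k' k s (emb R n k' g P) = emb R n k (s + g) P.
Proof.
move=> hg; rewrite /shiftP /emb mmap_comp; apply: mmap_ext=> j.
have hj : (g * n + j < k')%N by apply: bvar_lt; rewrite // leq_mul2r ltnS hg orbT.
by rewrite (mmap_bvar _ hj) /= bvar_div // bvar_mod.
Qed.

Hypothesis fC : forall p q, cg k' U p q -> cg k' V (f p) (f q).
Hypothesis fD : forall p q, cg k' V (f (p + q)) (f p + f q).
Hypothesis fB : forall (a0 b0 : {mpoly R[n]}) p,
  cg k' V (f (emb R n k' 0 a0 * p * emb R n k' ml b0))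
          (emb R n k' 0 a0 * f p * emb R n k' ml b0).

Lemma emb1 kk bb : emb R n kk bb 1 = 1.
Proof. by rewrite /emb rmorph1. Qed.
Lemma embC kk bb c : emb R n kk bb c%:MP = c%:MP.
Proof. by rewrite /emb mmapC. Qed.

Lemma f0 : cg k' V (f 0) 0.
Proof.
have := fD 0 0; rewrite addr0 => /congE h; apply/congE.
by rewrite subr0; have := IdlN h; rewrite opprB addrK.
Qed.

Lemma fZ c p : cg k' V (f (c *: p)) (c *: f p).
Proof.
have := fB c%:MP 1 p; rewrite !emb1 embC !mulr1 !mul_mpolyC //.
Qed.

Lemma fsum (I : Type) (r : seq I) (c : I -> R) (q : I -> {mpoly R[k']}) :
  cg k' V (f (\sum_(i <- r) c i *: q i)) (\sum_(i <- r) c i *: f (q i)).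
Proof.
elim: r => [|i r ih]; first by rewrite !big_nil; apply: f0.
rewrite !big_cons; apply: cong_trans (fD _ _) _; apply: congD=> //; exact: fZ.
Qed.

Lemma fL P q : cg k' V (f (emb R n k' 0 P * q)) (emb R n k' 0 P * f q).
Proof. by have := fB P 1 q; rewrite emb1 !mulr1. Qed.
Lemma fR P q : cg k' V (f (q * emb R n k' ml P)) (f q * emb R n k' ml P).
Proof. by have := fB 1 P q; rewrite emb1 !mul1r. Qed.

Lemma nth_v_mid t : (t < ml)%N -> nth 0%N v (s + t) = nth 0%N V t.
Proof. by move=> ht; rewrite nth_cat ltnNge leq_addr /= addKn nth_cat hV ht. Qed.
Lemma nth_u_mid t : (t < ml)%N -> nth 0%N u (s + t) = nth 0%N U t.
Proof. by move=> ht; rewrite nth_cat ltnNge leq_addr /= addKn nth_cat hU ht. Qed.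
Lemma nth_uv_left t : (t < s)%N -> nth 0%N u t = nth 0%N v t.
Proof. by move=> ht; rewrite !nth_cat ht. Qed.
Lemma nth_uv_right t : (s + ml <= t)%N -> nth 0%N u t = nth 0%N v t.
Proof.
move=> ht; have h1 : (s <= t)%N by apply: leq_trans ht; rewrite leq_addr.
rewrite !nth_cat ltnNge h1 /= hU hV.
have -> : (t - s < ml)%N = false by apply/negbTE; rewrite -leqNgt leq_subRL.
by [].
Qed.

Lemma shiftP_Idl r : Idl R n k' V r -> Idl R n k v (shiftP R n k' k s r).
Proof.
elim=> {r}.
- by rewrite /shiftP raddf0; apply: Idl0.
- move=> g [t [P [ht [hP ->]]]]; rewrite /shiftP raddfB /=.
  rewrite -/(shiftP R n k' k s _) -/(shiftP R n k' k s _).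
  rewrite !shiftP_emb -?hV //; last exact: ltnW.
  apply: IdlG; exists (s + t)%N, P; split.
    by rewrite size_v size_u -addnA ltn_add2l (leq_trans ht) // hV leq_addr.
  split; last by rewrite addnS.
  by rewrite (@nth_v_mid t) // -hV.
- by move=> x y _ hx _ hy; rewrite /shiftP raddfD; apply: IdlD.
- by move=> r0 x _ hx; rewrite /shiftP rmorphM; apply: IdlM.
Qed.

Lemma shiftP_cong p q : cg k' V p q -> cg k v (shiftP R n k' k s p) (shiftP R n k' k s q).
Proof.
by move/congE/shiftP_Idl=> h; apply/congE; move: h; rewrite /shiftP raddfB.
Qed.

Lemma shiftP_sum (I : Type) (r : seq I) (c : I -> R) (q : I -> {mpoly R[k']}) :
  shiftP R n k' k s (\sum_(i <- r) c i *: q i) = \sum_(i <- r) c i *: shiftP R n k' k s (q i).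
Proof.
rewrite /shiftP raddf_sum; apply: eq_bigr=> i _ /=.
by rewrite mmapZ mul_mpolyC.
Qed.

Lemma shiftPM p q : shiftP R n k' k s (p * q) = shiftP R n k' k s p * shiftP R n k' k s q.
Proof. by rewrite /shiftP rmorphM. Qed.

Lemma GC p q : cg k' U p q -> cg k v (G p) (G q).
Proof. by move=> h; apply: shiftP_cong; apply: fC. Qed.
Lemma Gsum (I : Type) (r : seq I) (c : I -> R) (q : I -> {mpoly R[k']}) :
  cg k v (G (\sum_(i <- r) c i *: q i)) (\sum_(i <- r) c i *: G (q i)).
Proof. by rewrite /G -shiftP_sum; apply: shiftP_cong; apply: fsum. Qed.
Lemma GL P q : cg k v (G (emb R n k' 0 P * q)) (emb R n k s P * G q).
Proof.
rewrite /G; apply: cong_trans (shiftP_cong (fL P q)) _.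
by rewrite shiftPM shiftP_emb // addn0; apply: cong_refl.
Qed.
Lemma GR P q : cg k v (G (q * emb R n k' ml P)) (G q * emb R n k (s + ml) P).
Proof.
rewrite /G; apply: cong_trans (shiftP_cong (fR P q)) _.
by rewrite shiftPM shiftP_emb //; apply: cong_refl.
Qed.

Lemma lin_Xemb m bb P : (bb <= size u)%N ->
  lin Lm ('X_[m] * emb R n k bb P) = \sum_(mu <- msupp P) P@_mu *:
    (mA 'X_[m] * mA (emb R n k bb 'X_[mu]) *
     G (mM 'X_[m] * mM (emb R n k bb 'X_[mu])) *
     (mC 'X_[m] * mC (emb R n k bb 'X_[mu]))).
Proof.
move=> hb; rewrite (emb_sum k bb P) mulr_sumr lin_sum; apply: eq_bigr=> mu _.
rewrite -scalerAr linZ; congr (_ *: _).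
have [m3 e3] : isMono ('X_[m] * emb R n k bb 'X_[mu]).
  by apply: isMonoM; [exists m | apply: isMono_emb; apply: blk_ok].
by rewrite e3 linX LmE -e3 !rmorphM.
Qed.

Lemma sum_sandwich (I : Type) (r : seq I) (c : I -> R) (A C : {mpoly R[k]}) (g : I -> {mpoly R[k]}) :
  \sum_(i <- r) c i *: (A * g i * C) = A * (\sum_(i <- r) c i *: g i) * C.
Proof.
rewrite mulr_sumr mulr_suml; apply: eq_bigr=> i _.
by rewrite scalerAl scalerAr.
Qed.

Lemma s_le_u : (s + ml <= size u)%N.
Proof. by rewrite size_u leq_addr. Qed.

Lemma lin_left m bb P : (bb < s)%N ->
  lin Lm ('X_[m] * emb R n k bb P) = emb R n k bb P * Lm m.
Proof.
move=> hb; have hb' : (bb <= size u)%N.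
  by apply: leq_trans (ltnW hb) _; apply: leq_trans s_le_u; rewrite leq_addr.
rewrite lin_Xemb // (emb_sum k bb P) mulr_suml; apply: eq_bigr=> mu _.
rewrite mA_emb // mM_emb // mC_emb // hb.
rewrite leqNgt hb /= ltnNge (leq_trans (ltnW hb)) ?leq_addr //= !mulr1.
by rewrite -scalerAl LmE; congr (_ *: _); rewrite [_ * emb _ _ _ _ _]mulrC !mulrA.
Qed.

Lemma lin_right m bb P : (s + ml < bb)%N -> (bb <= size u)%N ->
  lin Lm ('X_[m] * emb R n k bb P) = emb R n k bb P * Lm m.
Proof.
move=> hb hb'; rewrite lin_Xemb // (emb_sum k bb P) mulr_suml; apply: eq_bigr=> mu _.
rewrite mA_emb // mM_emb // mC_emb // hb.
have -> : (bb < s)%N = false by apply/negbTE; rewrite -leqNgt; apply: leq_trans (ltnW hb); rewrite leq_addr.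
have -> : (bb <= s + ml)%N = false by apply/negbTE; rewrite -ltnNge.
rewrite andbF !mulr1 -scalerAl LmE.
by congr (_ *: _); rewrite [RHS]mulrC -!mulrA.
Qed.

Lemma lin_mid m bb P : (s <= bb <= s + ml)%N ->
  cg k v (lin Lm ('X_[m] * emb R n k bb P))
         (mA 'X_[m] * G (mM 'X_[m] * emb R n k' (bb - s) P) * mC 'X_[m]).
Proof.
move=> /andP [h1 h2]; have hb' : (bb <= size u)%N by apply: leq_trans h2 s_le_u.
rewrite lin_Xemb //.
have -> : \sum_(mu <- msupp P) P@_mu *:
    (mA 'X_[m] * mA (emb R n k bb 'X_[mu]) *
     G (mM 'X_[m] * mM (emb R n k bb 'X_[mu])) *
     (mC 'X_[m] * mC (emb R n k bb 'X_[mu]))) =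
   \sum_(mu <- msupp P) P@_mu *:
    (mA 'X_[m] * G (mM 'X_[m] * emb R n k' (bb - s) 'X_[mu]) * mC 'X_[m]).
  apply: eq_bigr=> mu _; rewrite mA_emb // mM_emb // mC_emb // h1 h2.
  rewrite ltnNge h1 /= ltnNge h2 /= !mulr1 //.
rewrite sum_sandwich; apply: congMr; apply: congMl.
apply: cong_sym; rewrite (emb_sum k' (bb - s) P) mulr_sumr.
have -> : \sum_(mu <- msupp P) mM 'X_[m] * (P@_mu *: emb R n k' (bb - s) 'X_[mu]) =
   \sum_(mu <- msupp P) P@_mu *: (mM 'X_[m] * emb R n k' (bb - s) 'X_[mu]).
  by apply: eq_bigr=> mu _; rewrite scalerAr.
exact: Gsum.
Qed.

Lemma cg_sub0 kk w (p1 p2 q1 q2 : {mpoly R[kk]}) :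
  cg kk w p1 q1 -> cg kk w p2 q2 -> cg kk w q1 q2 -> cg kk w (p1 - p2) 0.
Proof.
move=> h1 h2 h3; apply/congE; rewrite subr0; apply/congE.
exact: cong_trans h1 (cong_trans h3 (cong_sym h2)).
Qed.

Lemma rear1 (A B C D : {mpoly R[k]}) : A * (D * B) * C = D * (A * B * C).
Proof. by ring. Qed.
Lemma rear2 (A B C D : {mpoly R[k]}) : A * (B * D) * C = D * (A * B * C).
Proof. by ring. Qed.

Lemma lin_mid_s m P :
  cg k v (lin Lm ('X_[m] * emb R n k s P)) (emb R n k s P * Lm m).
Proof.
apply: cong_trans (lin_mid m P _) _; first by rewrite leqnn leq_addr.
rewrite subnn (mulrC (mM _) (emb _ _ _ 0 _)).
apply: cong_trans (congMr _ (congMl _ (GL P (mM 'X_[m])))) _.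
by rewrite LmE rear1; apply: cong_refl.
Qed.

Lemma lin_mid_e m P :
  cg k v (lin Lm ('X_[m] * emb R n k (s + ml) P)) (emb R n k (s + ml) P * Lm m).
Proof.
apply: cong_trans (lin_mid m P _) _; first by rewrite leqnn leq_addr.
rewrite addKn.
apply: cong_trans (congMr _ (congMl _ (GR P (mM 'X_[m])))) _.
by rewrite LmE rear2; apply: cong_refl.
Qed.

Lemma lin_gen m t P : (t < size u)%N -> Defs.invariant R n (nth 0%N u t) P ->
  cg k v (lin Lm ('X_[m] * (emb R n k t P - emb R n k t.+1 P))) 0.
Proof.
move=> ht hP; rewrite mulrBr linB.
have hv : (t < size v)%N by rewrite size_v.
case: (ltnP t.+1 s) => h1.
  rewrite !lin_left //; last exact: ltnW.
  apply: (cg_sub0 (cong_refl _) (cong_refl _)); apply: congMr.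
  by apply: cong_gen=> //; rewrite -nth_uv_left // ltnW.
case: (ltnP t s) => h0.
  have e : t.+1 = s by apply/eqP; rewrite eqn_leq h0 h1.
  rewrite lin_left // e.
  apply: (cg_sub0 (cong_refl _) (lin_mid_s _ _)); apply: congMr.
  by rewrite -e; apply: cong_gen=> //; rewrite -nth_uv_left.
case: (ltnP t (s + ml)) => h2.
  have hm1 : (s <= t <= s + ml)%N by rewrite h0 ltnW.
  have hm2 : (s <= t.+1 <= s + ml)%N by rewrite h2 (leq_trans h0).
  apply: (cg_sub0 (lin_mid m P hm1) (lin_mid m P hm2)).
  apply: congMr; apply: congMl; apply: GC; apply: congMl.
  rewrite subSn //; apply: cong_gen; first by rewrite hU ltn_subLR.
  by rewrite -nth_u_mid ?subnKC // ltn_subLR.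
case: (ltnP (s + ml) t) => h3.
  rewrite !lin_right //; last exact: ltnW.
  apply: (cg_sub0 (cong_refl _) (cong_refl _)); apply: congMr.
  by apply: cong_gen=> //; rewrite -nth_uv_right // ltnW.
have e : t = (s + ml)%N by apply/eqP; rewrite eqn_leq h2 h3.
have h4 : (s + ml < t.+1)%N by rewrite e.
rewrite (lin_right m P h4 ht).
rewrite e; apply: (cg_sub0 (lin_mid_e _ _) (cong_refl _)); apply: congMr.
by rewrite -e; apply: cong_gen=> //; rewrite -nth_uv_right // e.
Qed.

Lemma cg0D kk w (x y : {mpoly R[kk]}) c : cg kk w x 0 -> cg kk w y 0 -> cg kk w (c *: x + y) 0.
Proof. by move=> hx hy; have := congD (congZ c hx) hy; rewrite scaler0 addr0. Qed.

Lemma lin_gen_all r g : bsgen R n k u g -> cg k v (lin Lm (r * g)) 0.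
Proof.
case=> t [P [ht [hP ->]]].
elim/mpolyind: r => [|c m r _ _ ih]; first by rewrite mul0r lin0; apply: cong_refl.
rewrite mulrDl linD -scalerAl linZ; apply: cg0D=> //; exact: lin_gen.
Qed.

Lemma lin_Idl x : Idl R n k u x ->
  cg k v (lin Lm x) 0 /\ forall r, cg k v (lin Lm (r * x)) 0.
Proof.
elim=> {x}.
- by split=> [|r]; rewrite ?mulr0 lin0; apply: cong_refl.
- move=> g hg; split=> [|r]; last exact: lin_gen_all.
  by rewrite -[g]mul1r; apply: lin_gen_all.
- move=> x y _ [hx1 hx2] _ [hy1 hy2]; split=> [|r].
    by rewrite linD -[lin Lm x]scale1r; apply: cg0D.
  by rewrite mulrDr linD -[lin Lm (r * x)]scale1r; apply: cg0D.
- move=> r x _ [hx1 hx2]; split=> [|r']; first exact: hx2.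
  by rewrite mulrA; apply: hx2.
Qed.

Theorem lift_cong p q : cg k u p q ->
  cg k v (liftMor R n k ml s f p) (liftMor R n k ml s f q).
Proof.
move/congE/lin_Idl=> [h _]; rewrite !liftMorE; apply/congE.
by move/congE: h; rewrite linB subr0.
Qed.
End Lift.

Lemma touch_disj i j t : ((i.+1 < j) || (j.+1 < i))%N -> touch t i -> ~~ touch t j.
Proof.
rewrite /touch => hij /orP [/eqP e1|/eqP e1]; apply/negP=> /orP [/eqP e2|/eqP e2]; lia.
Qed.

Lemma pos_of_lt tt m n : (tt < m * n)%N -> (0 < n)%N.
Proof. by move=> h; rewrite lt0n; apply/eqP=> e; rewrite e muln0 in h. Qed.

Lemma bvar_emb (R : realType) n k bb t (h : (t < n)%N) :
  bvar R n k bb t = emb R n k bb 'X_(Ordinal h).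
Proof. by rewrite emb_X. Qed.

Section Distant.
Variables (R : realType) (n : nat) (a b : seq nat) (i j k : nat).
Notation cg k u := (cong R n k u).
Notation s := (size a).
Notation U := [:: i; j].
Notation V := [:: j; i].
Notation u := (a ++ U ++ b).
Notation v := (a ++ V ++ b).
Notation k' := (2.+1 * n)%N.
Hypotheses (hij : ((i.+1 < j) || (j.+1 < i))%N) (hk : k = ((size u).+1 * n)%N).
Variable f : {mpoly R[k']} -> {mpoly R[k']}.
Hypothesis fC : forall p q, cg k' U p q -> cg k' V (f p) (f q).
Hypothesis fD : forall p q, cg k' V (f (p + q)) (f p + f q).
Hypothesis fB : forall (a0 b0 : {mpoly R[n]}) p,
  cg k' V (f (emb R n k' 0 a0 * p * emb R n k' 2 b0))
          (emb R n k' 0 a0 * f p * emb R n k' 2 b0).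
Hypothesis f1 : cg k' V (f 1) 1.

Definition psi0 (t : 'I_k') : {mpoly R[k']} :=
  if (t %/ n == 1)%N then
    (if touch (t %% n) i then bvar R n k' 2 (t %% n) else bvar R n k' 0 (t %% n))
  else 'X_t.

Lemma psi0_U q : cg k' U q (mmap (@mpolyC k' R) psi0 q).
Proof.
rewrite -{1}(mmap_id q); apply: cong_mmap=> t; rewrite /psi0.
case: eqP=> e; last by apply: cong_refl.
have hn : (0 < n)%N := pos_of_lt (ltn_ord t).
have ht : (t %% n < n)%N by rewrite ltn_mod.
rewrite -(@ord_divmod R n _ t) e !(bvar_emb _ _ _ ht); case: ifP=> ht'.
  apply: cong_gen=> //; apply: inv_notouch (Ordinal ht) _ => /=.
  by apply: touch_disj ht'.
apply: cong_sym; apply: cong_gen=> //.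
by apply: inv_notouch (Ordinal ht) _ => /=; rewrite ht'.
Qed.

Definition isE (y : {mpoly R[k']}) :=
  exists al be : {mpoly R[n]}, y = emb R n k' 0 al * emb R n k' 2 be.

Lemma isE1 : isE 1. Proof. by exists 1, 1; rewrite !emb1 mulr1. Qed.
Lemma isEM y z : isE y -> isE z -> isE (y * z).
Proof.
case=> [a1 [b1 ->]] [a2 [b2 ->]]; exists (a1 * a2), (b1 * b2).
by rewrite /emb !rmorphM /=; ring.
Qed.
Lemma isEX y e : isE y -> isE (y ^+ e).
Proof. by move=> h; elim: e => [|e ih]; rewrite ?expr0 ?exprS; [exact: isE1|exact: isEM]. Qed.

Lemma psi0_isE t : isE (psi0 t).
Proof.
have hn : (0 < n)%N := pos_of_lt (ltn_ord t).
have ht : (t %% n < n)%N by rewrite ltn_mod.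
rewrite /psi0; case: eqP=> e.
  case: ifP=> _; rewrite (bvar_emb _ _ _ ht).
    by exists 1, 'X_(Ordinal ht); rewrite emb1 mul1r.
  by exists 'X_(Ordinal ht), 1; rewrite emb1 mulr1.
have hd : (t %/ n < 3)%N by rewrite ltn_divLR // ltn_ord.
rewrite -(@ord_divmod R n _ t) (bvar_emb _ _ _ ht).
move: hd e; case: (t %/ n)%N => [|[|[|]]] // _ _.
  by exists 'X_(Ordinal ht), 1; rewrite emb1 mulr1.
by exists 1, 'X_(Ordinal ht); rewrite emb1 mul1r.
Qed.

Lemma f_isE y : isE y -> cg k' V (f y) y.
Proof.
case=> [al [be ->]]; have := fB al be 1; rewrite mulr1 => h.
apply: cong_trans h _; rewrite -{2}[emb R n k' 0 al]mulr1.
by apply: congMr; apply: congMl.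
Qed.

Lemma f_psi0 q : cg k' V (f (mmap (@mpolyC k' R) psi0 q)) (mmap (@mpolyC k' R) psi0 q).
Proof.
have e : mmap (@mpolyC k' R) psi0 q = \sum_(m <- msupp q) q@_m *: mmap1 psi0 m.
  by rewrite /mmap; apply: eq_bigr=> m _; rewrite mul_mpolyC.
rewrite e; apply: cong_trans (fsum fD fB _ _ _) _.
apply: cong_sum=> m _; apply: congZ; apply: f_isE.
by rewrite /mmap1; apply: (big_ind isE); [exact: isE1|exact: isEM|move=> t _; apply: isEX; apply: psi0_isE].
Qed.

Lemma f_psi q : cg k' V (f q) (mmap (@mpolyC k' R) psi0 q).
Proof. exact: cong_trans (fC (psi0_U q)) (f_psi0 q). Qed.

Definition psi (t : 'I_k) : {mpoly R[k]} :=
  if (t %/ n == s.+1)%N then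
    (if touch (t %% n) i then bvar R n k (s + 2) (t %% n) else bvar R n k s (t %% n))
  else 'X_t.

Lemma mmap1_mul3 kk kk' (g1 g2 g3 : 'I_kk -> {mpoly R[kk']}) m :
  mmap1 g1 m * mmap1 g2 m * mmap1 g3 m = mmap1 (fun t => g1 t * g2 t * g3 t) m.
Proof. by rewrite /mmap1 -!big_split /=; apply: eq_bigr=> t _; rewrite !exprMn. Qed.

Lemma shiftP_bvar g t (ht : (t < n)%N) : (g <= 2)%N ->
  shiftP R n k' k s (bvar R n k' g t) = bvar R n k (s + g) t.
Proof. by move=> hg; rewrite !(bvar_emb _ _ _ ht) shiftP_emb. Qed.

Lemma psi_var (t : 'I_k) :
  sA R n a t * shiftP R n k' k s (mmap (@mpolyC k' R) psi0 (sM R n a 2 t)) * sC R n a 2 t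
  = psi t.
Proof.
have hn : (0 < n)%N by apply: (@pos_of_lt t (size u).+1); rewrite -hk ltn_ord.
have ht : (t %% n < n)%N by rewrite ltn_mod.
rewrite /sA /sM /sC /psi.
case: (ltnP (t %/ n) s) => h1.
  rewrite /= ltnNge (leq_trans (ltnW h1)) ?leq_addr //=.
  rewrite (_ : (t %/ n == s.+1)%N = false); last by apply/negbTE; rewrite neq_ltn (ltn_trans h1).
  by rewrite rmorph1 /shiftP rmorph1 !mulr1.
case: (ltnP (s + 2) (t %/ n)) => h2.
  rewrite /=.
  rewrite (_ : (t %/ n == s.+1)%N = false); last first.
    by apply/negbTE; rewrite neq_ltn (leq_trans _ h2) ?orbT // addn2 ltnS.
  by rewrite rmorph1 /shiftP rmorph1 !mul1r.
rewrite /= mul1r mulr1.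
have hg : (t %/ n - s <= 2)%N by rewrite leq_subLR.
have hid : ((t %/ n - s) * n + t %% n < k')%N by apply: bvar_lt; rewrite // leq_mul2r ltnS hg orbT.
rewrite (mmap_bvar _ hid) /psi0 /= bvar_div // bvar_mod //.
have -> : (t %/ n - s == 1)%N = (t %/ n == s.+1)%N.
  by apply/eqP/eqP; lia.
case: eqP=> e.
  by case: ifP=> _; rewrite shiftP_bvar // ?addn0.
rewrite -(bvarE R hid) shiftP_bvar // subnKC //.
exact: ord_divmod.
Qed.

Lemma Lm_psi m : cg k v (Lm a f m) (mmap (@mpolyC k R) psi 'X_[m]).
Proof.
rewrite LmE /G.
apply: cong_trans (congMr _ (congMl _ (@shiftP_cong R n a b U V 2 k erefl erefl _ _ (f_psi _)))) _.
rewrite [mmap _ psi _]mmapX -(mmap1_eq _ psi_var) -mmap1_mul3.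
rewrite [mmap _ (sA R n a (k:=k)) _]mmapX [mmap _ (sC R n a 2 (k:=k)) _]mmapX.
rewrite /shiftP (mmap_comp (sM R n a 2 (k:=k))) mmap_comp mmapX.
rewrite (mmap1_eq _ (fun t => mmap_comp _ _ _)) //; exact: cong_refl.
Qed.

Theorem distant_psi x : cg k v (liftMor R n k 2 s f x) (mmap (@mpolyC k R) psi x).
Proof.
rewrite liftMorE; elim/mpolyind: x => [|c m p _ _ ih].
  by rewrite lin0 raddf0; apply: cong_refl.
rewrite linD linZ linX raddfD /= mmapZ mul_mpolyC.
by apply: congD=> //; apply: congZ; apply: Lm_psi.
Qed.

Lemma take_sD (c : seq nat) d : take (s + d) (a ++ c) = a ++ take d c.
Proof. by rewrite take_cat ltnNge leq_addr /= addKn. Qed.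

Lemma seg_uv bb t : bb != s.+1 -> seg u bb t = seg v bb t.
Proof.
move=> hb; rewrite /seg !take_cat; case: ltnP=> // h.
rewrite !count_cat; congr (_ + _)%N.
move: hb; rewrite -(subnKC h) addKn; case: (bb - s)%N => [|[|d]] //=.
  by rewrite addn1 eqxx.
by move=> _; rewrite !subSS subn0 /= !addnA [(touch t j + _)%N]addnC.
Qed.

Lemma psi_seg (t : 'I_k) : exists bb, [/\ (bb <= size v)%N, psi t = bvar R n k bb (t %% n)
  & seg v bb (t %% n) = seg u (t %/ n) (t %% n)].
Proof.
have hn : (0 < n)%N by apply: (@pos_of_lt t (size u).+1); rewrite -hk ltn_ord.
have hd : (t %/ n <= size u)%N by rewrite -ltnS ltn_divLR // -hk ltn_ord.
have hsv : size v = size u by rewrite !size_cat.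
have hs2 : (s + 2 <= size u)%N by rewrite !size_cat /= addnA leq_addr.
rewrite /psi; case: eqP=> e.
  have tk : forall x y : seq nat, take s (a ++ x) = a by move=> x y; rewrite take_cat ltnn subnn take0 cats0.
  case: ifP=> ht.
    exists (s + 2)%N; split=> //; first by rewrite hsv.
    rewrite e /seg -[s.+1]addn1 !take_sD !count_cat /= take0 ht (negbTE (touch_disj hij ht)) /=.
    lia.
  exists s; split=> //; first by rewrite hsv (leq_trans _ hs2) ?leq_addr.
  rewrite e /seg -[s.+1]addn1 -{1}[s]addn0 !take_sD !count_cat /= ht.
  by rewrite !addn0.
exists (t %/ n)%N; split; first by rewrite hsv.
  by rewrite ord_divmod.
by rewrite seg_uv //; apply/eqP.
Qed.
End Distant.

Lemma size_altw i j m : size (altw i j m) = m.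
Proof. by elim: m i j => [|m ih] i j //=; rewrite ih. Qed.

Lemma edge_find (a c1 c2 : seq nat) x y : x != y ->
  find (fun t => nth 0%N (a ++ x :: c1) t != nth 0%N (a ++ y :: c2) t)
       (iota 0 (size (a ++ x :: c1))) = size a.
Proof.
move=> hxy; rewrite size_cat /= iotaD find_cat.
rewrite ifF; last first.
  apply/negbTE/hasPn=> t; rewrite mem_iota add0n /= => ht.
  by rewrite !nth_cat ht eqxx.
by rewrite size_iota /= add0n !nth_cat ltnn subnn /= hxy addn0.
Qed.

Section Edges.
Local Unset Implicit Arguments.
Variables (R : realType) (n : nat).
Variable F : forall i j : nat, PR R ((mlen i j).+1 * n) -> PR R ((mlen i j).+1 * n).
Hypothesis hF : forall i j : nat, (0 < i < n)%N -> (0 < j < n)%N -> i != j ->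
          isBraidMor R n i j (F i j).
Notation cg k u := (cong R n k u).

Lemma edgeMorE k (a c1 c2 : seq nat) x y : x != y ->
  edgeMor R n k F (a ++ x :: c1) (a ++ y :: c2) =
  liftMor R n k (mlen x y) (size a) (F x y).
Proof.
move=> hxy; rewrite /edgeMor edge_find //.
by rewrite !nth_cat ltnn subnn.
Qed.

Lemma braid_cong i j k (a b U V : seq nat) x y : (0 < i < n)%N -> (0 < j < n)%N -> i != j ->
  U = altw i j (mlen i j) -> V = altw j i (mlen i j) ->
  k = ((size (a ++ U ++ b)).+1 * n)%N ->
  cg k (a ++ U ++ b) x y ->
  cg k (a ++ V ++ b) (liftMor R n k (mlen i j) (size a) (F i j) x)
                     (liftMor R n k (mlen i j) (size a) (F i j) y).
Proof.
move=> hi hj hij eU eV hk; case: (hF i j hi hj hij) => fC fD fB _ _.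
apply: (@lift_cong R n a b U V) => //; try by rewrite ?eU ?eV size_altw.
all: by rewrite ?eU ?eV.
Qed.

Definition segprop k (u v : seq nat) (phi : 'I_k -> {mpoly R[k]}) :=
  forall t : 'I_k, exists bb, [/\ (bb <= size v)%N, phi t = bvar R n k bb (t %% n)
     & seg v bb (t %% n) = seg u (t %/ n) (t %% n)].

Lemma dedge_psi k (a b : seq nat) i j : (0 < i < n)%N -> (0 < j < n)%N ->
  ((i.+1 < j) || (j.+1 < i))%N ->
  k = ((size (a ++ [:: i; j] ++ b)).+1 * n)%N ->
  exists phi, segprop k (a ++ [:: i; j] ++ b) (a ++ [:: j; i] ++ b) phi /\
   forall x, cg k (a ++ [:: j; i] ++ b)
     (edgeMor R n k F (a ++ [:: i; j] ++ b) (a ++ [:: j; i] ++ b) x)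
     (mmap (@mpolyC k R) phi x).
Proof.
move=> hi hj hij hk.
have hne : i != j by apply/eqP=> e; move: hij; rewrite e ltnNge leqnSn.
exists (psi R n a i (k:=k)); split.
  by move=> t; apply: psi_seg hij hk t.
move=> x; rewrite edgeMorE //.
have e2 : mlen i j = 2.
  rewrite /mlen; case: eqP=> [e|_]; first by move: hij; rewrite e; lia.
  by case: eqP=> // e; move: hij; rewrite e; lia.
have := hF i j hi hj hne; move: (F i j); rewrite /isBraidMor.
move: (mlen i j) e2 => ml -> f [fC fD fB _ f1].
exact: (distant_psi hij hk fC fD fB f1).
Qed.
End Edges.

Lemma isRex_size n (w : 'S_n) u v : isRex w u -> isRex w v -> size u = size v.
Proof.
by case=> hu mu [hv mv]; apply/eqP; rewrite eqn_leq (mu _ hv) (mv _ hu).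
Qed.

Lemma isRex_valid n (w : 'S_n) u l : isRex w u -> l \in u -> (0 < l < n)%N.
Proof. by case=> [[/allP hv _] _] /hv. Qed.

Section Walks.
Local Unset Implicit Arguments.
Variables (R : realType) (n : nat) (w : 'S_n).
Variable F : forall i j : nat, PR R ((mlen i j).+1 * n) -> PR R ((mlen i j).+1 * n).
Hypothesis hF : forall i j : nat, (0 < i < n)%N -> (0 < j < n)%N -> i != j ->
          isBraidMor R n i j (F i j).
Notation cg k u := (cong R n k u).

Lemma edge_cong k u v x y : isRex w u -> isRex w v -> aedge u v \/ dedge u v ->
  k = ((size u).+1 * n)%N -> cg k u x y ->
  cg k v (edgeMor R n k F u v x) (edgeMor R n k F u v y).
Proof.
move=> hu hv [[a [b [i [[eu ev]|[eu ev]]]]] | [a [b [i [j [hij [eu ev]]]]]]] hk; subst u v.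
- have hi : (0 < i < n)%N by apply: (isRex_valid hu); rewrite mem_cat inE eqxx orbT.
  have hi1 : (0 < i.+1 < n)%N by apply: (isRex_valid hu); rewrite mem_cat !inE eqxx !orbT.
  have hne : i != i.+1 by rewrite neq_ltn ltnSn.
  rewrite [edgeMor _ _ _ _ _ _](@edgeMorE R n F k a (i.+1 :: i :: b) (i :: i.+1 :: b) i i.+1 hne).
  have e3 : mlen i i.+1 = 3 by rewrite /mlen eqxx orbT.
  apply: (braid_cong R n F hF i i.+1 k a b [:: i; i.+1; i] [:: i.+1; i; i.+1]) => //; by rewrite e3.
- have hi : (0 < i < n)%N by apply: (isRex_valid hu); rewrite mem_cat !inE eqxx !orbT.
  have hi1 : (0 < i.+1 < n)%N by apply: (isRex_valid hu); rewrite mem_cat inE eqxx orbT.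
  have hne : i.+1 != i by rewrite neq_ltn ltnSn orbT.
  rewrite [edgeMor _ _ _ _ _ _](@edgeMorE R n F k a (i :: i.+1 :: b) (i.+1 :: i :: b) i.+1 i hne).
  have e3 : mlen i.+1 i = 3 by rewrite /mlen eqxx.
  apply: (braid_cong R n F hF i.+1 i k a b [:: i.+1; i; i.+1] [:: i; i.+1; i]) => //; by rewrite e3.
- have hi : (0 < i < n)%N by apply: (isRex_valid hu); rewrite mem_cat inE eqxx orbT.
  have hj : (0 < j < n)%N by apply: (isRex_valid hu); rewrite mem_cat !inE eqxx !orbT.
  have hne : i != j by apply/eqP=> e; move: hij; rewrite e; lia.
  rewrite [edgeMor _ _ _ _ _ _](@edgeMorE R n F k a (j :: b) (i :: b) i j hne).
  have e2 : mlen i j = 2.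
    rewrite /mlen; case: eqP=> [e|_]; first by move: hij; rewrite e; lia.
    by case: eqP=> // e; move: hij; rewrite e; lia.
  apply: (braid_cong R n F hF i j k a b [:: i; j] [:: j; i]) => //; by rewrite e2.
Qed.

Definition allRex (p : seq (seq nat)) := forall z, z \in p -> isRex w z.

Lemma allRex_cons u vs : allRex (u :: vs) -> isRex w u /\ allRex vs.
Proof.
move=> h; split; first by apply: h; rewrite inE eqxx.
by move=> z hz; apply: h; rewrite inE hz orbT.
Qed.

Lemma path_cong k : forall vs u es, allRex (u :: vs) -> adjSteps (steps u vs) es ->
  k = ((size u).+1 * n)%N -> forall x y, cg k u x y ->
  cg k (last u vs) (pathMor R n k F (u :: vs) x) (pathMor R n k F (u :: vs) y).
Proof.
elim=> [|v vs ih] u es hall hadj hk x y hxy //=.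
have [hu hall'] := allRex_cons _ _ hall.
have [hv _] := allRex_cons _ _ hall'.
have hsz : size v = size u by apply: (isRex_size hv hu).
have hk' : k = ((size v).+1 * n)%N by rewrite hsz.
have [he [es' hadj']] : (aedge u v \/ dedge u v) /\ exists es', adjSteps (steps v vs) es'.
  case: hadj => [[ha [es' [_ h]]] | [hd h]]; split; by [left | right | exists es' | exists es].
exact: (ih v es' hall' hadj' hk' _ _ (edge_cong k u v x y hu hv he hk hxy)).
Qed.

Definition segprop' k (u v : seq nat) (phi : 'I_k -> {mpoly R[k]}) :=
  forall t : 'I_k, exists bb, [/\ (bb <= size v)%N, phi t = bvar R n k bb (t %% n)
     & seg v bb (t %% n) = seg u (t %/ n) (t %% n)].

Lemma segprop_cong k u v phi1 phi2 x : segprop' k u v phi1 -> segprop' k u v phi2 ->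
  k = ((size v).+1 * n)%N ->
  cg k v (mmap (@mpolyC k R) phi1 x) (mmap (@mpolyC k R) phi2 x).
Proof.
move=> h1 h2 hk; apply: cong_mmap=> t.
have [b1 [hb1 -> e1]] := h1 t; have [b2 [hb2 -> e2]] := h2 t.
have hn : (0 < n)%N by apply: (@pos_of_lt t (size v).+1); rewrite -hk ltn_ord.
by apply: seg_cong; rewrite ?ltn_mod // e1 e2.
Qed.

Lemma distant_walk k : forall vs u, allRex (u :: vs) -> adjSteps (steps u vs) [::] ->
  k = ((size u).+1 * n)%N ->
  exists phi, segprop' k u (last u vs) phi /\
    forall x, cg k (last u vs) (pathMor R n k F (u :: vs) x) (mmap (@mpolyC k R) phi x).
Proof.
elim=> [|v vs ih] u hall hadj hk.
  exists (fun t => 'X_t); split=> [t|x] /=.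
    exists (t %/ n)%N; split; last by [].
      have hn : (0 < n)%N by apply: (@pos_of_lt t (size u).+1); rewrite -hk ltn_ord.
      by rewrite -ltnS ltn_divLR // -hk ltn_ord.
    by rewrite ord_divmod.
  by rewrite mmap_id; apply: cong_refl.
have [hu hall'] := allRex_cons _ _ hall.
have [hv _] := allRex_cons _ _ hall'.
have hsz : size v = size u by apply: (isRex_size hv hu).
have hk' : k = ((size v).+1 * n)%N by rewrite hsz.
have [hd hadj'] : dedge u v /\ adjSteps (steps v vs) [::].
  by case: hadj => [[_ [es' [e _]]] | //].
have [psi [hpsi epsi]] : exists phi, segprop' k u v phi /\
   forall x, cg k v (edgeMor R n k F u v x) (mmap (@mpolyC k R) phi x).
  case: hd => [a [b [i [j [hij [eu ev]]]]]]; subst u v.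
  have hi : (0 < i < n)%N by apply: (isRex_valid hu); rewrite mem_cat inE eqxx orbT.
  have hj : (0 < j < n)%N by apply: (isRex_valid hu); rewrite mem_cat !inE eqxx !orbT.
  exact: (dedge_psi R n F hF k a b i j hi hj hij hk).
have [phi [hphi ephi]] := ih v hall' hadj' hk'.
exists (fun t => mmap (@mpolyC k R) phi (psi t)); split.
  move=> t; have [b1 [hb1 e1 s1]] := hpsi t.
  have hn : (0 < n)%N by apply: (@pos_of_lt t (size u).+1); rewrite -hk ltn_ord.
  have ht : (t %% n < n)%N by rewrite ltn_mod.
  have hid : (b1 * n + t %% n < k)%N by apply: bvar_lt; rewrite // hk' leq_mul2r ltnS hb1 orbT.
  have [b2 [hb2 e2 s2]] := hphi (Ordinal hid).
  exists b2; split=> //.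
    by rewrite e1 (mmap_bvar _ hid) e2 /= bvar_mod.
  rewrite -s1 -(bvar_mod b1 ht) -{2}(bvar_div b1 ht); exact: s2.
move=> x /=.
apply: cong_trans (path_cong k vs v [::] hall' hadj' hk' _ _ (epsi x)) _.
by rewrite -mmap_comp; apply: ephi.
Qed.

Lemma adj_split : forall vs u a0 b0 es', adjSteps (steps u vs) ((a0, b0) :: es') ->
  exists d rest, [/\ vs = d ++ b0 :: rest, adjSteps (steps u d) [::], last u d = a0,
    aedge a0 b0 & adjSteps (steps b0 rest) es'].
Proof.
elim=> [|v vs ih] u a0 b0 es' //=.
case=> [[ha [es'' [[e1 e2 e3] h]]] | [hd h]].
  subst; exists [::], vs; split=> //.
have [d [rest [e1 e2 e3 e4 e5]]] := ih v a0 b0 es' h.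
exists (v :: d), rest; split=> //=; first by rewrite e1.
by right.
Qed.

Lemma pathMor_cons k u v l x :
  pathMor R n k F (u :: v :: l) x = pathMor R n k F (v :: l) (edgeMor R n k F u v x).
Proof. by []. Qed.

Lemma pathMor_cat k : forall d u b0 rest x,
  pathMor R n k F (u :: d ++ b0 :: rest) x =
  pathMor R n k F (b0 :: rest) (edgeMor R n k F (last u d) b0 (pathMor R n k F (u :: d) x)).
Proof.
elim=> [|v d ih] u b0 rest x //.
by rewrite cat_cons !pathMor_cons ih.
Qed.

Lemma allRex_cat u d rest : allRex (u :: d ++ rest) -> allRex (u :: d) /\ allRex rest.
Proof.
move=> h; split=> z hz; apply: h.
  by move: hz; rewrite !inE mem_cat => /orP [->|->]; rewrite ?orbT.
by rewrite inE mem_cat hz !orbT.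
Qed.

Lemma distant_same k vs vs' u x y : allRex (u :: vs) -> allRex (u :: vs') ->
  adjSteps (steps u vs) [::] -> adjSteps (steps u vs') [::] ->
  last u vs = last u vs' -> k = ((size u).+1 * n)%N -> cg k u x y ->
  cg k (last u vs) (pathMor R n k F (u :: vs) x) (pathMor R n k F (u :: vs') y).
Proof.
move=> h1 h2 a1 a2 el hk hxy.
have [phi1 [s1 e1]] := distant_walk k vs u h1 a1 hk.
have [phi2 [s2 e2]] := distant_walk k vs' u h2 a2 hk.
have hl : isRex w (last u vs).
  by apply: h1; rewrite inE; case: (vs) => [|z zs] //=; rewrite ?eqxx // mem_last orbT.
have hu : isRex w u by apply: h1; rewrite inE eqxx.
have hkl : k = ((size (last u vs)).+1 * n)%N by rewrite (isRex_size hl hu).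
apply: cong_trans (path_cong k vs u [::] h1 a1 hk _ _ hxy) _.
apply: cong_trans (e1 y) _.
rewrite el in s1 *; apply: cong_trans (segprop_cong k u _ phi1 phi2 y s1 s2 _) _.
  by rewrite -el.
by apply: cong_sym; apply: e2.
Qed.

Lemma main_walk k : forall es u vs vs' x y, allRex (u :: vs) -> allRex (u :: vs') ->
  adjSteps (steps u vs) es -> adjSteps (steps u vs') es ->
  last u vs = last u vs' -> k = ((size u).+1 * n)%N -> cg k u x y ->
  cg k (last u vs) (pathMor R n k F (u :: vs) x) (pathMor R n k F (u :: vs') y).
Proof.
elim=> [|[a0 b0] es ih] u vs vs' x y h1 h2 a1 a2 el hk hxy.
  exact: distant_same.
have [d [rest [ev ad ld ae ar]]] := adj_split vs u a0 b0 es a1.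
have [d' [rest' [ev' ad' ld' _ ar']]] := adj_split vs' u a0 b0 es a2.
subst vs vs'.
have [h1a h1b] := allRex_cat u d (b0 :: rest) h1.
have [h2a h2b] := allRex_cat u d' (b0 :: rest') h2.
rewrite !pathMor_cat ld ld'.
rewrite !last_cat /= in el; rewrite last_cat.
have hu : isRex w u by apply: h1; rewrite inE eqxx.
have hla : isRex w (last u d).
  by apply: h1a; rewrite inE; case: (d) => [|z zs] //=; rewrite ?eqxx // mem_last orbT.
have hb0 : isRex w b0 by apply: h1b; rewrite inE eqxx.
have hka : k = ((size a0).+1 * n)%N by rewrite -ld (isRex_size hla hu).
have hkb : k = ((size b0).+1 * n)%N by rewrite (isRex_size hb0 hu).
apply: (ih b0 rest rest' _ _ h1b h2b ar ar' el hkb).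
apply: edge_cong => //; first by rewrite -ld.
  by left.
have := distant_same k d d' u x y h1a h2a ad ad' (etrans ld (esym ld')) hk hxy.
by rewrite ld.
Qed.
End Walks.

Unset Implicit Arguments.


Lemma lexle_anti : forall r v, lexle r v -> lexle v r -> r = v.
Proof.
elim=> [|x r ih] [|y v] //=.
move=> /orP [h1|/andP [/eqP e1 h1]] /orP [h2|/andP [/eqP e2 h2]].
- by move: (ltn_trans h1 h2); rewrite ltnn.
- by move: h1; rewrite e2 ltnn.
- by move: h2; rewrite e1 ltnn.
- by rewrite e1 (ih v).
Qed.

Lemma rep_unique n (w : 'S_n) C r1 r2 : isRep w C r1 -> isRep w C r2 -> r1 = r2.
Proof.
case=> [h1 [c1 m1]] [h2 [c2 m2]].
by apply: lexle_anti; [apply: m1 | apply: m2].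
Qed.

Theorem proposition3p2 (R : realType) (n : nat) (hn : (2 <= n)%N) (w : 'S_n)
  (F : forall i j : nat,
         PR R ((mlen i j).+1 * n) -> PR R ((mlen i j).+1 * n))
  (hF : forall i j : nat, (0 < i < n)%N -> (0 < j < n)%N -> i != j ->
          isBraidMor R n i j (F i j))
  (E : seq nat -> seq nat -> seq nat * seq nat) (hE : validRedge w E)
  (Cs : seq (seq nat)) (hP : isGpath w Cs)
  (p p' : seq (seq nat)) (hp : isLift w E Cs p) (hp' : isLift w E Cs p') :
  let k := ((size (head [::] Cs)).+1 * n)%N in
  forall x : {mpoly R[k]},
    cong R n k (last [::] p) (pathMor R n k F p x) (pathMor R n k F p' x).
Proof.
move=> k x.
case: Cs hP hp hp' @k x => [|C1 Cs'] // hP hp hp' k x.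
case: p hp => [|v0 vs] // hp; case: p' hp' => [|v0' vs'] // hp'.
case: hp => [hall [hr1 [hr2 hadj]]]; case: hp' => [hall' [hr1' [hr2' hadj']]].
have e0 := rep_unique _ _ _ _ _ hr1 hr1'; subst v0'.
have el := rep_unique _ _ _ _ _ hr2 hr2'.
have hC1 : isRex w C1 by case: hP => h _; apply: h; rewrite inE eqxx.
have hv0 : isRex w v0 by apply: hall; rewrite inE eqxx.
have hk : k = ((size v0).+1 * n)%N by rewrite /k /= (isRex_size hC1 hv0).
exact: (main_walk R n w F hF k _ v0 vs vs' x x hall hall' hadj hadj' el hk (cong_refl x)).
Qed.
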